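(* Let $n,m\ge 1$, $p_{ij}\in\mathbb{R}^3$, $N^x_i,N^y_i,N^z_i\in\mathbb{R}^3\setminus\{0\}$, $d_x,d_y>0$, $\epsilon>0$. Let $\mathbb{B}_R=\{r:\|r-r_c\|_\infty\le\delta_R\}$ with $\delta_R\ge0$, $\sqrt3\,\delta_R\le\pi$, $\Phi_c=R(r_c)$, and $\mathbb{B}_t=\{\Delta:\|\Delta-\Delta_c\|_\infty\le\delta_t\}$ with $\delta_t\ge0$. For each $i,j$ and each $a\in\{x,y,z\}$, with $N=N^a_i$ and $w=p_{ij}-\Delta_c$, let $c=(\Phi_c\bar N)^\top w$, let $\beta=\angle(\Phi_c\bar N,w)$ (if $w=0$ set $g_{\max}=g_{\min}=0$), and define $g_{\max},g_{\min}$ by: $g_{\max}=\|w\|$ if $\beta\le\sqrt3\delta_R$, otherwise $g_{\max}=\|w\|\max(\cos(\beta-\sqrt3\delta_R),\cos(\beta+\sqrt3\delta_R))$; $g_{\min}=-\|w\|$ if $\beta\ge\pi-\sqrt3\delta_R$, otherwise $g_{\min}=\|w\|\min(\cos(\beta-\sqrt3\delta_R),\cos(\beta+\sqrt3\delta_R))$. Set $$\delta^a_{ij}=\sqrt3\,\delta_t+\max\bigl(|c-g_{\min}|,\ |c-g_{\max}|\bigr).$$ Define $$\hat Q'(\mathbb{B}_R,\mathbb{B}_t)=\sum_{i=1}^n\sum_{j=1}^m \lfloor |(\bar N^x_i)^\top\Phi_c^\top(p_{ij}-\Delta_c)-\|N^x_i\||<d_x+\epsilon+\delta^x_{ij}\rfloor\cdot\lfloor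 |(\bar N^y_i)^\top\Phi_c^\top(p_{ij}-\Delta_c)-\|N^y_i\||<d_y+\epsilon+\delta^y_{ij}\rfloor\cdot\lfloor |(\bar N^z_i)^\top\Phi_c^\top(p_{ij}-\Delta_c)-\|N^z_i\||<\epsilon+\delta^z_{ij}\rfloor.$$ Then $\hat Q'(\mathbb{B}_R,\mathbb{B}_t)\ge\max_{r\in\mathbb{B}_R,\Delta\in\mathbb{B}_t}Q(R(r),\Delta)$, and if $\delta_R=\delta_t=0$ then $\hat Q'(\mathbb{B}_R,\mathbb{B}_t)=Q(\Phi_c,\Delta_c)$.
   Context: For a nonzero vector $N\in\mathbb{R}^3$, $\bar N:=N/\|N\|$; $\angle(a,b)\in[0,\pi]$ is the angle between nonzero vectors. $\lfloor S\rfloor$ denotes the indicator of the statement $S$. For $r\in\mathbb{R}^3$, $R(r)\in\mathrm{SO}(3)$ is the rotation by angle $\|r\|$ about the axis $r/\|r\|$ ($R(0)=I$). For $\Phi\in\mathrm{SO}(3)$, $\Delta\in\mathbb{R}^3$, $$Q(\Phi,\Delta)=\sum_{i=1}^n\sum_{j=1}^m \lfloor |(\bar N^x_i)^\top\Phi^\top(p_{ij}-\Delta)-\|N^x_i\||<d_x+\epsilon\rfloor\cdot\lfloor |(\bar N^y_i)^\top\Phi^\top(p_{ij}-\Delta)-\|N^y_i\||<d_y+\epsilon\rfloor\cdot\lfloor |(\bar N^z_i)^\top\Phi^\top(p_{ij}-\Delta)-\|N^z_i\||<\epsilon\rfloor .$$ *)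

(* Defs.v *)
From Stdlib Require Import Reals Lra.
Open Scope R_scope.

Record vec3 := V3 { vx : R; vy : R; vz : R }.

Definition vadd (a b : vec3) : vec3 := V3 (vx a + vx b) (vy a + vy b) (vz a + vz b).
Definition vsub (a b : vec3) : vec3 := V3 (vx a - vx b) (vy a - vy b) (vz a - vz b).
Definition vscale (k : R) (a : vec3) : vec3 := V3 (k * vx a) (k * vy a) (k * vz a).
Definition dot (a b : vec3) : R := vx a * vx b + vy a * vy b + vz a * vz b.
Definition cross (a b : vec3) : vec3 :=
  V3 (vy a * vz b - vz a * vy b) (vz a * vx b - vx a * vz b) (vx a * vy b - vy a * vx b).
Definition norm (a : vec3) : R := sqrt (dot a a).
Definition norm_inf (a : vec3) : R := Rmax (Rabs (vx a)) (Rmax (Rabs (vy a)) (Rabs (vz a))).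
Definition vzero : vec3 := V3 0 0 0.

Definition unitv (N : vec3) : vec3 := vscale (/ norm N) N.

Definition angle (a b : vec3) : R := acos (dot a b / (norm a * norm b)).

(* Linear maps R^3 -> R^3 represented as functions; rotation R(r) by angle ||r||
   about axis r/||r|| (Rodrigues' formula), with R(0) = I. *)
Definition rot (r : vec3) (v : vec3) : vec3 :=
  let th := norm r in
  if Req_EM_T th 0 then v else
  let k := unitv r in
  vadd (vadd (vscale (cos th) v) (vscale (sin th) (cross k v)))
       (vscale ((1 - cos th) * dot k v) k).

(* We state Phi^T through
   the dot-product identity (Phi^T u)·v, using (Phi N)^T w = N^T Phi^T w.
   We define the term  a^T Phi^T w  as  (Phi a)^T w. *)
Definition dotRT (Phi : vec3 -> vec3) (a w : vec3) : R := dot (Phi a) w.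

Definition ind (x y : R) : nat := if Rlt_dec x y then 1%nat else 0%nat.

Fixpoint sumN (n : nat) (f : nat -> nat) : nat :=
  match n with O => O | S k => (sumN k f + f k)%nat end.

Definition Q (n m : nat) (p : nat -> nat -> vec3) (Nx Ny Nz : nat -> vec3)
  (dx dy eps : R) (Phi : vec3 -> vec3) (Delta : vec3) : nat :=
  sumN n (fun i => sumN m (fun j =>
    (ind (Rabs (dotRT Phi (unitv (Nx i)) (vsub (p i j) Delta) - norm (Nx i))) (dx + eps)
   * ind (Rabs (dotRT Phi (unitv (Ny i)) (vsub (p i j) Delta) - norm (Ny i))) (dy + eps)
   * ind (Rabs (dotRT Phi (unitv (Nz i)) (vsub (p i j) Delta) - norm (Nz i))) eps)%nat)).

(* g_max and g_min for unit direction u = Phi_c Nbar, vector w, rotation radius dR *)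
Definition gmax (u w : vec3) (dR : R) : R :=
  if Req_EM_T (norm w) 0 then 0 else
  let beta := angle u w in
  if Rle_dec beta (sqrt 3 * dR) then norm w
  else norm w * Rmax (cos (beta - sqrt 3 * dR)) (cos (beta + sqrt 3 * dR)).

Definition gmin (u w : vec3) (dR : R) : R :=
  if Req_EM_T (norm w) 0 then 0 else
  let beta := angle u w in
  if Rle_dec (PI - sqrt 3 * dR) beta then - norm w
  else norm w * Rmin (cos (beta - sqrt 3 * dR)) (cos (beta + sqrt 3 * dR)).

Definition delta_bd (N pt rc Dc : vec3) (dR dt : R) : R :=
  let u := rot rc (unitv N) in
  let w := vsub pt Dc in
  let c := dot u w in
  sqrt 3 * dt + Rmax (Rabs (c - gmin u w dR)) (Rabs (c - gmax u w dR)).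

Definition Qhat (n m : nat) (p : nat -> nat -> vec3) (Nx Ny Nz : nat -> vec3)
  (dx dy eps : R) (rc Dc : vec3) (dR dt : R) : nat :=
  let Phic := rot rc in
  sumN n (fun i => sumN m (fun j =>
    (ind (Rabs (dotRT Phic (unitv (Nx i)) (vsub (p i j) Dc) - norm (Nx i)))
         (dx + eps + delta_bd (Nx i) (p i j) rc Dc dR dt)
   * ind (Rabs (dotRT Phic (unitv (Ny i)) (vsub (p i j) Dc) - norm (Ny i)))
         (dy + eps + delta_bd (Ny i) (p i j) rc Dc dR dt)
   * ind (Rabs (dotRT Phic (unitv (Nz i)) (vsub (p i j) Dc) - norm (Nz i)))
         (eps + delta_bd (Nz i) (p i j) rc Dc dR dt))%nat)).

(* Main.v *)
From Coquelicot Require Import Coquelicot.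
From Stdlib Require Import Reals Lra Lia.
Require Import Defs.
Open Scope R_scope.
Lemma ucos_le_sin u : 0 <= u <= PI -> u * cos u <= sin u.
Proof.
  intros Hu.
  destruct (MVT_gen (fun x => sin x - x * cos x) 0 u (fun x => x * sin x)) as [c [Hc Heq]].
  - intros x _. auto_derive; auto. ring.
  - intros x _. apply derivable_continuous_pt.
    apply derivable_pt_minus. apply derivable_pt_sin.
    apply derivable_pt_mult. apply derivable_pt_id. apply derivable_pt_cos.
  - rewrite Rmin_left in Hc by lra. rewrite Rmax_right in Hc by lra.
    rewrite sin_0, cos_0 in Heq.
    assert (0 <= sin c) by (apply sin_ge_0; lra).
    assert (0 <= c * sin c * (u - 0)) by (apply Rmult_le_pos; [apply Rmult_le_pos|]; lra).
    lra.
Qed.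

Lemma sinc_decr s t : 0 < s -> s <= t -> t <= PI -> s * sin t <= t * sin s.
Proof.
  intros Hs Hst Ht.
  destruct (MVT_gen (fun x => sin x / x) s t (fun x => (x * cos x - sin x) / (x * x))) as [c [Hc Heq]].
  - intros x Hx. rewrite Rmin_left in Hx by lra. rewrite Rmax_right in Hx by lra.
    auto_derive. lra. field. lra.
  - intros x Hx. rewrite Rmin_left in Hx by lra. rewrite Rmax_right in Hx by lra.
    apply derivable_continuous_pt.
    apply derivable_pt_div. apply derivable_pt_sin. apply derivable_pt_id. unfold id; lra.
  - rewrite Rmin_left in Hc by lra. rewrite Rmax_right in Hc by lra.
    assert (H1 := ucos_le_sin c ltac:(lra)).
    assert (Hd : (c * cos c - sin c) / (c * c) * (t - s) <= 0).
    { apply Rmult_le_0_r; [|lra]. unfold Rdiv. apply Rmult_le_0_r. lra.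
      left; apply Rinv_0_lt_compat; nra. }
    assert (sin t / t <= sin s / s) by lra.
    unfold Rdiv in H.
    apply Rmult_le_compat_r with (r := s * t) in H; [|nra].
    replace (sin t * / t * (s * t)) with (s * sin t) in H by (field; lra).
    replace (sin s * / s * (s * t)) with (t * sin s) in H by (field; lra).
    lra.
Qed.
Definition sinc (y : R) : R := if Req_EM_T y 0 then 1 else sin y / y.

Lemma sinc_mono a b : 0 <= a -> a <= b -> b <= PI -> sinc b <= sinc a.
Proof.
  intros Ha Hab Hb. unfold sinc.
  destruct (Req_EM_T b 0); destruct (Req_EM_T a 0); try lra.
  - assert (H := sin_lt_x b ltac:(lra)).
    apply Rmult_le_reg_r with b; [lra|]. unfold Rdiv. rewrite Rmult_assoc, Rinv_l; lra.
  - assert (H := sinc_decr a b ltac:(lra) Hab Hb).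
    apply Rmult_le_reg_r with (a*b); [nra|]. unfold Rdiv.
    replace (sin b * / b * (a * b)) with (a * sin b) by (field; lra).
    replace (sin a * / a * (a * b)) with (b * sin a) by (field; lra). lra.
Qed.

Definition psi (x : R) := cos (sqrt x).
Definition dpsi (x : R) := - sinc (sqrt x) / 2.

Lemma psi_derive x : 0 < x -> is_derive psi x (dpsi x).
Proof.
  intros Hx. unfold psi, dpsi, sinc.
  assert (0 < sqrt x) by (apply sqrt_lt_R0; lra).
  destruct (Req_EM_T (sqrt x) 0); [lra|].
  auto_derive. lra. field. lra.
Qed.

Lemma psi_cont x : 0 <= x -> continuity_pt psi x.
Proof.
  intros Hx. unfold psi.
  apply (continuity_pt_comp sqrt cos). now apply continuity_pt_sqrt.
  apply derivable_continuous_pt, derivable_pt_cos.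
Qed.

Lemma dpsi_mono a b : 0 <= a -> a <= b -> b <= PI * PI -> dpsi a <= dpsi b.
Proof.
  intros. unfold dpsi.
  assert (sinc (sqrt b) <= sinc (sqrt a)).
  { apply sinc_mono. apply sqrt_pos. apply sqrt_le_1_alt; lra.
    rewrite <- (sqrt_square PI) by (pose proof PI_RGT_0; lra). apply sqrt_le_1_alt; lra. }
  lra.
Qed.

Lemma psi_convex x0 x x1 : 0 <= x0 -> x0 <= x -> x <= x1 -> x1 <= PI * PI ->
  (x1 - x0) * psi x <= (x1 - x) * psi x0 + (x - x0) * psi x1.
Proof.
  intros H0 H1 H2 H3.
  destruct (MVT_gen psi x0 x dpsi) as [c1 [Hc1 E1]].
  { intros y Hy. rewrite Rmin_left in Hy by lra. rewrite Rmax_right in Hy by lra.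
    apply psi_derive; lra. }
  { intros y Hy. rewrite Rmin_left in Hy by lra. rewrite Rmax_right in Hy by lra.
    apply psi_cont; lra. }
  destruct (MVT_gen psi x x1 dpsi) as [c2 [Hc2 E2]].
  { intros y Hy. rewrite Rmin_left in Hy by lra. rewrite Rmax_right in Hy by lra.
    apply psi_derive; lra. }
  { intros y Hy. rewrite Rmin_left in Hy by lra. rewrite Rmax_right in Hy by lra.
    apply psi_cont; lra. }
  rewrite Rmin_left in Hc1, Hc2 by lra. rewrite Rmax_right in Hc1, Hc2 by lra.
  assert (Hm := dpsi_mono c1 c2 ltac:(lra) ltac:(lra) ltac:(lra)).
  assert ((x1 - x) * (x - x0) * dpsi c1 <= (x1 - x) * (x - x0) * dpsi c2).
  { apply Rmult_le_compat_l; nra. }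
  nra.
Qed.
Lemma psi_ext x0 x x1 c1 : 0 <= x0 -> x0 <= x -> x <= x1 -> x <= PI * PI ->
  -1 <= c1 -> (x1 <= PI * PI -> c1 = psi x1) ->
  (x1 - x0) * psi x <= (x1 - x) * psi x0 + (x - x0) * c1.
Proof.
  intros H0 H1 H2 H3 Hcc Hc1.
  destruct (Rle_dec x1 (PI*PI)) as [Hl|Hl].
  { rewrite (Hc1 Hl). now apply psi_convex. }
  set (m := PI * PI) in *.
  assert (Hpm : psi m = -1).
  { unfold psi, m. rewrite sqrt_square by (pose proof PI_RGT_0; lra). apply cos_PI. }
  assert (HY : -1 <= psi x) by (apply COS_bound).
  assert (HP : -1 <= psi x0) by (apply COS_bound).
  destruct (Req_dec x0 m) as [Em|Em].
  { assert (x = x0) by lra. subst x. nra. }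
  assert (Hc := psi_convex x0 x m H0 H1 H3 ltac:(unfold m; lra)).
  rewrite Hpm in Hc.
  set (Y := psi x + 1) in *. set (P := psi x0 + 1) in *.
  assert (A : (m - x0) * Y <= (m - x) * P) by (unfold Y, P; lra).
  assert (B : (m - x0) * ((x1 - x0) * Y) <= (m - x0) * ((x1 - x) * P)).
  { assert ((x1 - x0) * ((m - x0) * Y) <= (x1 - x0) * ((m - x) * P)).
    { apply Rmult_le_compat_l; lra. }
    assert ((x - x0) * (m - x1) * P <= 0).
    { assert (0 <= (x - x0) * (x1 - m)) by (apply Rmult_le_pos; lra).
      assert (0 <= (x - x0) * (x1 - m) * P) by (apply Rmult_le_pos; unfold P; lra). nra. }
    nra. }
  apply Rmult_le_reg_l in B; [|lra].
  assert (0 <= (x - x0) * (c1 + 1)) by (apply Rmult_le_pos; lra).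
  unfold Y, P in B. nra.
Qed.

Lemma trig_key a b k e : 0 <= a -> 0 <= b -> -1 <= k <= 1 -> 0 <= e -> e <= PI ->
  e * e = a * a + b * b - 2 * a * b * k ->
  cos e <= cos a * cos b + sin a * sin b * k.
Proof.
  intros Ha Hb Hk He HeP Ee.
  set (x0 := (a - b) * (a - b)). set (x1 := (a + b) * (a + b)).
  assert (Hx0 : psi x0 = cos (a - b)).
  { unfold psi, x0. destruct (Rle_dec b a).
    - rewrite sqrt_square; lra.
    - replace ((a - b) * (a - b)) with ((b - a) * (b - a)) by ring.
      rewrite sqrt_square by lra. replace (a - b) with (- (b - a)) by ring. now rewrite cos_neg. }
  assert (Hx : psi (e * e) = cos e) by (unfold psi; now rewrite sqrt_square).
  assert (Hab : 0 <= a * b) by (apply Rmult_le_pos; lra).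
  assert (L1 : x0 <= e * e) by (unfold x0; rewrite Ee; assert (0 <= a*b*(1-k)) by (apply Rmult_le_pos; lra); nra).
  assert (L2 : e * e <= x1) by (unfold x1; rewrite Ee; assert (0 <= a*b*(1+k)) by (apply Rmult_le_pos; lra); nra).
  assert (G := psi_ext x0 (e * e) x1 (cos (a + b)) ltac:(unfold x0; apply Rle_0_sqr) L1
    L2 ltac:(apply Rmult_le_compat; lra) ltac:(apply COS_bound)
    ltac:(intros; unfold psi, x1; rewrite sqrt_square; lra)).
  rewrite Hx0, Hx in G. rewrite cos_minus, cos_plus in G.
  unfold x0, x1 in G.
  destruct (Req_dec (a * b) 0) as [Z|Z].
  - assert (sin a * sin b = 0).
    { destruct (Rmult_integral _ _ Z) as [->| ->]; rewrite sin_0; ring. }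
    assert (e * e = (a - b) * (a - b)) by nra.
    assert (cos e = cos (a - b)).
    { rewrite <- Hx, H0. exact Hx0. }
    rewrite H1, cos_minus. nra.
  - assert (0 < a * b) by (destruct Ha, Hb; nra).
    replace ((a + b) * (a + b) - (a - b) * (a - b)) with (4 * (a * b)) in G by ring.
    rewrite Ee in G.
    apply Rmult_le_reg_l with (4 * (a * b)); [lra|]. nra.
Qed.
Lemma dot_pos a : 0 <= dot a a.
Proof. destruct a; unfold dot; simpl; nra. Qed.

Lemma dot_comm a b : dot a b = dot b a.
Proof. destruct a, b; unfold dot; simpl; ring. Qed.

Lemma norm_pos a : 0 <= norm a.
Proof. apply sqrt_pos. Qed.

Lemma norm_sq a : norm a * norm a = dot a a.
Proof. unfold norm. apply sqrt_sqrt, dot_pos. Qed.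

Lemma norm0 a : norm a = 0 -> a = vzero.
Proof.
  intros H. apply sqrt_eq_0 in H; [|apply dot_pos].
  destruct a as [x y z]; unfold dot in H; simpl in H; unfold vzero.
  f_equal; nra.
Qed.

Lemma cs2 a b : dot a b * dot a b <= dot a a * dot b b.
Proof.
  destruct a as [a1 a2 a3], b as [b1 b2 b3]; unfold dot; simpl.
  assert (E : (a1*a1+a2*a2+a3*a3)*(b1*b1+b2*b2+b3*b3) - (a1*b1+a2*b2+a3*b3)*(a1*b1+a2*b2+a3*b3)
    = (a1*b2-a2*b1)*(a1*b2-a2*b1) + (a1*b3-a3*b1)*(a1*b3-a3*b1) + (a2*b3-a3*b2)*(a2*b3-a3*b2)) by ring.
  assert (0 <= (a1*b2-a2*b1)*(a1*b2-a2*b1) + (a1*b3-a3*b1)*(a1*b3-a3*b1) + (a2*b3-a3*b2)*(a2*b3-a3*b2)).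
  { pose proof (Rle_0_sqr (a1*b2-a2*b1)); pose proof (Rle_0_sqr (a1*b3-a3*b1)); pose proof (Rle_0_sqr (a2*b3-a3*b2)); unfold Rsqr in *; lra. }
  lra.
Qed.

Lemma cs a b : Rabs (dot a b) <= norm a * norm b.
Proof.
  unfold norm. rewrite <- sqrt_mult by apply dot_pos.
  rewrite <- sqrt_Rsqr_abs. apply sqrt_le_1_alt. unfold Rsqr. apply cs2.
Qed.

Lemma unitv_dot N : N <> vzero -> dot (unitv N) (unitv N) = 1.
Proof.
  intros HN.
  assert (Hn : norm N <> 0) by (intro E; apply HN, norm0, E).
  assert (E : dot (unitv N) (unitv N) = / norm N * / norm N * dot N N).
  { destruct N; unfold unitv, vscale, dot; simpl; ring. }
  rewrite E, <- norm_sq. field. exact Hn.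
Qed.

Lemma unitv_dot_le N : dot (unitv N) (unitv N) <= 1.
Proof.
  destruct (Req_dec (norm N) 0) as [E|E].
  - apply norm0 in E. subst. unfold unitv, vscale, dot, vzero; simpl. lra.
  - assert (E2 : dot (unitv N) (unitv N) = / norm N * / norm N * dot N N).
    { destruct N; unfold unitv, vscale, dot; simpl; ring. }
    rewrite E2, <- norm_sq. right. field. exact E.
Qed.

Lemma norm_unit u : dot u u = 1 -> norm u = 1.
Proof. intros H. unfold norm. rewrite H. apply sqrt_1. Qed.

(* quaternion rotation *)
Definition Rq (w0 : R) (w v : vec3) : vec3 :=
  vadd (vadd (vscale (w0 * w0 - dot w w) v) (vscale (2 * w0) (cross w v)))
       (vscale (2 * dot w v) w).

Lemma Rq_dot p0 P q0 Q v :
  dot (Rq p0 P v) (Rq q0 Q v) =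
  let s := p0 * q0 + dot P Q in
  let W := vsub (vsub (vscale p0 Q) (vscale q0 P)) (cross P Q) in
  (s * s - dot W W) * dot v v + 2 * (dot W v * dot W v).
Proof.
  destruct P, Q, v; unfold Rq, dot, vadd, vsub, vscale, cross; simpl; ring.
Qed.

Lemma quat_norm p0 P q0 Q :
  let s := p0 * q0 + dot P Q in
  let W := vsub (vsub (vscale p0 Q) (vscale q0 P)) (cross P Q) in
  s * s + dot W W = (p0 * p0 + dot P P) * (q0 * q0 + dot Q Q).
Proof.
  destruct P, Q; unfold dot, vsub, vscale, cross; simpl; ring.
Qed.

Definition qv (r : vec3) : vec3 := vscale (sin (norm r / 2)) (unitv r).
Definition q0 (r : vec3) : R := cos (norm r / 2).

Lemma unitv_norm r : norm r <> 0 -> dot (unitv r) (unitv r) = 1.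
Proof. intros H. apply unitv_dot. intro E; subst; apply H. unfold norm, dot, vzero; simpl.
  replace (0*0+0*0+0*0) with 0 by ring. apply sqrt_0. Qed.

Lemma q_unit r : q0 r * q0 r + dot (qv r) (qv r) = 1.
Proof.
  unfold q0, qv.
  destruct (Req_dec (norm r) 0) as [E|E].
  - rewrite E. replace (0/2) with 0 by field. rewrite sin_0, cos_0.
    destruct (unitv r); unfold dot, vscale; simpl; ring.
  - assert (H := unitv_norm r E).
    assert (E2 : dot (vscale (sin (norm r / 2)) (unitv r)) (vscale (sin (norm r / 2)) (unitv r))
              = sin (norm r / 2) * sin (norm r / 2) * dot (unitv r) (unitv r)).
    { destruct (unitv r); unfold dot, vscale; simpl; ring. }
    rewrite E2, H. pose proof (sin2_cos2 (norm r / 2)). unfold Rsqr in H0. lra.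
Qed.

Lemma rot_q r v : rot r v = Rq (q0 r) (qv r) v.
Proof.
  unfold rot, q0, qv.
  destruct (Req_EM_T (norm r) 0) as [E|E].
  - rewrite E. replace (0/2) with 0 by field. rewrite sin_0, cos_0.
    destruct v, (unitv r); unfold Rq, dot, vadd, vscale, cross; simpl; f_equal; ring.
  - assert (H := unitv_norm r E).
    set (t := norm r) in *.
    replace t with (2 * (t / 2)) at 1 2 3 by field.
    rewrite cos_2a, sin_2a.
    set (C := cos (t/2)). set (S := sin (t/2)).
    assert (HS : S * S + C * C = 1) by (pose proof (sin2_cos2 (t/2)); unfold Rsqr in *; unfold S, C; lra).
    set (k := unitv r) in *.
    assert (E3 : dot (vscale S k) (vscale S k) = S * S) by
      (rewrite <- (Rmult_1_r (S*S)), <- H; destruct k; unfold dot, vscale; simpl; ring).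
    unfold Rq. rewrite E3. rewrite <- HS at 1.
    destruct v as [v1 v2 v3], k as [k1 k2 k3]; unfold dot, vadd, vscale, cross; simpl.
    f_equal; ring.
Qed.
Lemma rot_unit r v : dot v v = 1 -> dot (rot r v) (rot r v) = 1.
Proof.
  intros Hv. rewrite rot_q, Rq_dot. cbv zeta.
  assert (HW : vsub (vsub (vscale (q0 r) (qv r)) (vscale (q0 r) (qv r))) (cross (qv r) (qv r)) = vzero).
  { destruct (qv r); unfold vsub, vscale, cross, vzero; simpl; f_equal; ring. }
  rewrite HW, Hv, q_unit.
  assert (E1 : dot vzero vzero = 0) by (unfold dot, vzero; simpl; ring).
  assert (E2 : dot vzero v = 0) by (unfold dot, vzero; simpl; ring).
  rewrite E1, E2. ring.
Qed.

Lemma dot_unitv a b : dot a b = norm a * norm b * dot (unitv a) (unitv b).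
Proof.
  destruct (Req_dec (norm a) 0) as [Ea|Ea].
  { rewrite Ea. apply norm0 in Ea. subst. unfold dot, vzero; simpl; ring. }
  destruct (Req_dec (norm b) 0) as [Eb|Eb].
  { rewrite Eb. apply norm0 in Eb. subst. unfold dot, vzero; simpl; ring. }
  assert (E : dot (unitv a) (unitv b) = / norm a * / norm b * dot a b).
  { destruct a, b; unfold unitv, vscale, dot; simpl; ring. }
  rewrite E. field. split; assumption.
Qed.

Lemma norm_le1 u : dot u u <= 1 -> norm u <= 1.
Proof. intros H. unfold norm. rewrite <- sqrt_1. apply sqrt_le_1_alt. exact H. Qed.

Lemma rot_dot_bound a b v : dot v v = 1 -> norm (vsub a b) <= PI ->
  cos (norm (vsub a b)) <= dot (rot a v) (rot b v).
Proof.
  intros Hv Hab. rewrite !rot_q, Rq_dot. cbv zeta.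
  pose proof (quat_norm (q0 a) (qv a) (q0 b) (qv b)) as QN. cbv zeta in QN.
  rewrite !q_unit in QN.
  set (s := q0 a * q0 b + dot (qv a) (qv b)) in *.
  set (W := vsub (vsub (vscale (q0 a) (qv b)) (vscale (q0 b) (qv a))) (cross (qv a) (qv b))) in *.
  rewrite Hv.
  assert (0 <= dot W v * dot W v) by nra.
  set (k := dot (unitv a) (unitv b)).
  assert (Hs : s = cos (norm a / 2) * cos (norm b / 2) + sin (norm a / 2) * sin (norm b / 2) * k).
  { unfold s, k, q0, qv. destruct (unitv a), (unitv b); unfold dot, vscale; simpl; ring. }
  assert (Hk : -1 <= k <= 1).
  { assert (Rabs k <= 1).
    { unfold k. eapply Rle_trans; [apply cs|].
      pose proof (norm_le1 _ (unitv_dot_le a)). pose proof (norm_le1 _ (unitv_dot_le b)).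
      pose proof (norm_pos (unitv a)). pose proof (norm_pos (unitv b)). nra. }
    apply Rabs_le_between in H0. lra. }
  set (e := norm (vsub a b) / 2).
  assert (He : e * e = norm a / 2 * (norm a / 2) + norm b / 2 * (norm b / 2) - 2 * (norm a / 2) * (norm b / 2) * k).
  { unfold e. 
    assert (E1 : norm (vsub a b) * norm (vsub a b) = norm a * norm a + norm b * norm b - 2 * dot a b).
    { rewrite !norm_sq. destruct a, b; unfold dot, vsub; simpl; ring. }
    rewrite dot_unitv in E1. fold k in E1. nra. }
  pose proof (norm_pos (vsub a b)). pose proof (norm_pos a). pose proof (norm_pos b).
  pose proof PI_RGT_0.
  assert (T := trig_key (norm a / 2) (norm b / 2) k e ltac:(lra) ltac:(lra) Hk ltac:(unfold e; lra) ltac:(unfold e; lra) He).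
  rewrite <- Hs in T.
  assert (Hc0 : 0 <= cos e) by (apply cos_ge_0; unfold e; lra).
  replace (norm (vsub a b)) with (2 * e) by (unfold e; field).
  rewrite cos_2a_cos.
  nra.
Qed.

Lemma norm_inf_bound d M : norm_inf d <= M -> norm d <= sqrt 3 * M.
Proof.
  intros H. unfold norm_inf in H. destruct d as [x y z]; simpl in H.
  pose proof (Rmax_l (Rabs x) (Rmax (Rabs y) (Rabs z))).
  pose proof (Rmax_r (Rabs x) (Rmax (Rabs y) (Rabs z))).
  pose proof (Rmax_l (Rabs y) (Rabs z)). pose proof (Rmax_r (Rabs y) (Rabs z)).
  assert (Hx : Rabs x <= M) by lra. assert (Hy : Rabs y <= M) by lra. assert (Hz : Rabs z <= M) by lra.
  assert (HM : 0 <= M) by (pose proof (Rabs_pos x); lra).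
  apply Rabs_le_between in Hx. apply Rabs_le_between in Hy. apply Rabs_le_between in Hz.
  unfold norm, dot; simpl.
  rewrite <- (sqrt_square M) by exact HM. rewrite <- sqrt_mult by (try apply Rmult_le_pos; lra).
  apply sqrt_le_1_alt.
  assert (x * x <= M * M) by nra. assert (y * y <= M * M) by nra. assert (z * z <= M * M) by nra.
  lra.
Qed.
Lemma sph x y z : dot x x = 1 -> dot y y = 1 -> dot z z = 1 ->
  Rabs (dot x z - dot x y * dot y z) <= sqrt (1 - dot x y * dot x y) * sqrt (1 - dot y z * dot y z).
Proof.
  intros Hx Hy Hz.
  set (a := vsub x (vscale (dot x y) y)). set (b := vsub z (vscale (dot y z) y)).
  assert (E1 : dot a b = dot x z - 2*(dot x y*dot y z) + dot x y * dot y z * dot y y).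
  { unfold a, b. destruct x, y, z; unfold dot, vsub, vscale; simpl; ring. }
  assert (E2 : dot a a = dot x x - 2*(dot x y*dot x y) + dot x y * dot x y * dot y y).
  { unfold a. destruct x, y; unfold dot, vsub, vscale; simpl; ring. }
  assert (E3 : dot b b = dot z z - 2*(dot y z*dot y z) + dot y z * dot y z * dot y y).
  { unfold b. destruct z, y; unfold dot, vsub, vscale; simpl; ring. }
  rewrite Hx, Hy in E2. rewrite Hy, Hz in E3. rewrite Hy in E1.
  replace (dot x z - dot x y * dot y z) with (dot a b) by lra.
  replace (1 - dot x y * dot x y) with (dot a a) by lra.
  replace (1 - dot y z * dot y z) with (dot b b) by lra.
  apply cs.
Qed.

Lemma cos_le_dec x y : 0 <= x -> x <= y -> y <= PI -> cos y <= cos x.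
Proof.
  intros. destruct (Req_dec x y) as [->|N]; [lra|].
  left. apply cos_decreasing_1; lra.
Qed.

Lemma dot_bound u w : dot u u = 1 -> dot w w = 1 -> -1 <= dot u w <= 1.
Proof.
  intros. pose proof (cs u w). rewrite !norm_unit in H1 by assumption.
  apply Rabs_le_between in H1. lra.
Qed.

Lemma gbounds u uc w dR : dot u u = 1 -> dot uc uc = 1 ->
  0 <= sqrt 3 * dR <= PI -> cos (sqrt 3 * dR) <= dot u uc ->
  gmin uc w dR <= dot u w <= gmax uc w dR.
Proof.
  intros Hu Huc Hth Hc.
  unfold gmin, gmax, angle. rewrite (norm_unit uc Huc), Rmult_1_l.
  destruct (Req_EM_T (norm w) 0) as [E|E].
  { apply norm0 in E. subst. unfold dot, vzero; simpl. lra. }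
  set (nw := norm w) in *. set (th := sqrt 3 * dR) in *.
  assert (Hnw : 0 < nw) by (pose proof (norm_pos w); unfold nw in *; lra).
  set (wh := vscale (/ nw) w).
  assert (Hwh : dot wh wh = 1).
  { assert (dot wh wh = / nw * / nw * dot w w) by (unfold wh; destruct w; unfold dot, vscale; simpl; ring).
    rewrite H, <- norm_sq. fold nw. field. lra. }
  assert (Ew : forall v, dot v w = nw * dot v wh).
  { intros v. unfold wh. destruct v, w; unfold dot, vscale; simpl. field. lra. }
  assert (Ecb : dot uc w / nw = dot uc wh) by (rewrite Ew; field; lra).
  rewrite Ecb, (Ew u).
  set (cb := dot uc wh). set (cu := dot u wh). set (c1 := dot u uc).
  assert (Bcb := dot_bound uc wh Huc Hwh). fold cb in Bcb.
  assert (Bcu := dot_bound u wh Hu Hwh). fold cu in Bcu.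
  assert (Bc1 := dot_bound u uc Hu Huc). fold c1 in Bc1.
  set (beta := acos cb). set (gam := acos c1).
  assert (Cb : cos beta = cb) by (apply cos_acos; lra).
  assert (Sb : sin beta = sqrt (1 - cb * cb)) by (unfold beta; rewrite sin_acos by lra; unfold Rsqr; auto).
  assert (Cg : cos gam = c1) by (apply cos_acos; lra).
  assert (Sg : sin gam = sqrt (1 - c1 * c1)) by (unfold gam; rewrite sin_acos by lra; unfold Rsqr; auto).
  assert (Hb := acos_bound cb). fold beta in Hb.
  assert (Hg := acos_bound c1). fold gam in Hg.
  assert (Hgth : gam <= th).
  { destruct (Rle_dec gam th) as [l|l]; [exact l|].
    assert (cos gam < cos th) by (apply cos_decreasing_1; lra). fold c1 in Hc; lra. }
  assert (S := sph u uc wh Hu Huc Hwh). fold c1 cb cu in S.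
  rewrite <- Sb, <- Sg in S.
  apply Rabs_le_between in S.
  assert (Up : cu <= cos (beta - gam)) by (rewrite cos_minus, Cb, Cg; nra).
  assert (Lo : cos (beta + gam) <= cu) by (rewrite cos_plus, Cb, Cg; nra).
  split.
  - destruct (Rle_dec (PI - th) beta).
    + nra.
    + assert (cos (beta + th) <= cos (beta + gam)) by (apply cos_le_dec; lra).
      pose proof (Rmin_r (cos (beta - th)) (cos (beta + th))).
      apply Rmult_le_compat_l; lra.
  - destruct (Rle_dec beta th).
    + nra.
    + assert (cos (beta - gam) <= cos (beta - th)) by (apply cos_le_dec; lra).
      pose proof (Rmax_l (cos (beta - th)) (cos (beta + th))).
      apply Rmult_le_compat_l; lra.
Qed.

Lemma term_bound N pt r rc Delta Dc dR dt : N <> vzero ->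
  0 <= dR -> sqrt 3 * dR <= PI -> 0 <= dt ->
  norm_inf (vsub r rc) <= dR -> norm_inf (vsub Delta Dc) <= dt ->
  Rabs (dotRT (rot r) (unitv N) (vsub pt Delta) - dotRT (rot rc) (unitv N) (vsub pt Dc))
  <= delta_bd N pt rc Dc dR dt.
Proof.
  intros HN HdR HPI Hdt Hr HD.
  unfold dotRT, delta_bd. cbv zeta.
  assert (Hv := unitv_dot N HN).
  set (v := unitv N) in *.
  assert (Hu := rot_unit r v Hv). assert (Huc := rot_unit rc v Hv).
  set (u := rot r v) in *. set (uc := rot rc v) in *.
  assert (Hs3 : 0 <= sqrt 3) by apply sqrt_pos.
  assert (Hnr := norm_inf_bound _ _ Hr).
  assert (HnD := norm_inf_bound _ _ HD).
  assert (Hcos : cos (sqrt 3 * dR) <= dot u uc).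
  { eapply Rle_trans; [|apply rot_dot_bound; auto; lra].
    apply cos_le_dec; auto. apply norm_pos. }
  assert (G := gbounds u uc (vsub pt Dc) dR Hu Huc ltac:(split; [apply Rmult_le_pos|]; lra) Hcos).
  assert (Split : dot u (vsub pt Delta) = dot u (vsub pt Dc) - dot u (vsub Delta Dc)).
  { destruct u, pt, Delta, Dc; unfold dot, vsub; simpl; ring. }
  assert (T : Rabs (dot u (vsub Delta Dc)) <= sqrt 3 * dt).
  { eapply Rle_trans; [apply cs|]. rewrite (norm_unit u Hu). lra. }
  set (c := dot uc (vsub pt Dc)).
  set (gm := gmin uc (vsub pt Dc) dR) in *. set (gM := gmax uc (vsub pt Dc) dR) in *.
  assert (M : Rabs (dot u (vsub pt Dc) - c) <= Rmax (Rabs (c - gm)) (Rabs (c - gM))).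
  { pose proof (Rmax_l (Rabs (c - gm)) (Rabs (c - gM))).
    pose proof (Rmax_r (Rabs (c - gm)) (Rabs (c - gM))).
    destruct (Rle_dec c (dot u (vsub pt Dc))).
    - rewrite Rabs_right by lra. 
      assert (dot u (vsub pt Dc) - c <= Rabs (c - gM)).
      { rewrite Rabs_left1; lra. }
      lra.
    - rewrite Rabs_left by lra.
      assert (- (dot u (vsub pt Dc) - c) <= Rabs (c - gm)).
      { rewrite Rabs_right; lra. }
      lra. }
  rewrite Split.
  replace (dot u (vsub pt Dc) - dot u (vsub Delta Dc) - c)
    with ((dot u (vsub pt Dc) - c) + - dot u (vsub Delta Dc)) by ring.
  eapply Rle_trans; [apply Rabs_triang|]. rewrite Rabs_Ropp. lra.
Qed.

Lemma delta_zero N pt rc Dc : N <> vzero -> delta_bd N pt rc Dc 0 0 = 0.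
Proof.
  intros HN. unfold delta_bd. cbv zeta.
  assert (Hv := unitv_dot N HN).
  assert (Hu := rot_unit rc _ Hv).
  set (u := rot rc (unitv N)) in *.
  set (w := vsub pt Dc).
  rewrite Rmult_0_r, Rplus_0_l.
  assert (E : gmin u w 0 = dot u w /\ gmax u w 0 = dot u w).
  { unfold gmin, gmax, angle. rewrite Rmult_0_r, Rminus_0_r, Rplus_0_r, (norm_unit u Hu), Rmult_1_l.
    destruct (Req_EM_T (norm w) 0) as [Ew|Ew].
    { apply norm0 in Ew. rewrite Ew. unfold dot, vzero; simpl. split; ring. }
    assert (Hb : -1 <= dot u w / norm w <= 1).
    { pose proof (cs u w). rewrite (norm_unit u Hu), Rmult_1_l in H.
      pose proof (norm_pos w). apply Rabs_le_between in H.
      split.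
      - apply Rmult_le_reg_r with (norm w); [lra|]. unfold Rdiv. rewrite Rmult_assoc, Rinv_l; lra.
      - apply Rmult_le_reg_r with (norm w); [lra|]. unfold Rdiv. rewrite Rmult_assoc, Rinv_l; lra. }
    assert (Cb := cos_acos _ Hb).
    assert (Bd := acos_bound (dot u w / norm w)).
    set (beta := acos (dot u w / norm w)) in *.
    assert (K : norm w * cos beta = dot u w) by (rewrite Cb; field; exact Ew).
    split.
    - destruct (Rle_dec PI beta).
      + assert (beta = PI) by lra. rewrite H in K. rewrite cos_PI in K. lra.
      + rewrite Rminus_0_r, Rmin_left by lra. exact K.
    - destruct (Rle_dec beta 0).
      + assert (beta = 0) by lra. rewrite H in K. rewrite cos_0 in K. lra.
      + rewrite Rminus_0_r, Rmax_left by lra. exact K. }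
  destruct E as [E1 E2]. rewrite E1, E2, Rminus_diag, Rabs_R0, Rmax_left; lra.
Qed.

Lemma sumN_le n f g : (forall i, (i < n)%nat -> (f i <= g i)%nat) -> (sumN n f <= sumN n g)%nat.
Proof.
  induction n; intros H; simpl. lia.
  assert (f n <= g n)%nat by (apply H; lia).
  assert (sumN n f <= sumN n g)%nat by (apply IHn; intros; apply H; lia). lia.
Qed.

Lemma sumN_ext n f g : (forall i, (i < n)%nat -> f i = g i) -> sumN n f = sumN n g.
Proof.
  induction n; intros H; simpl. reflexivity.
  rewrite H by lia. rewrite IHn; auto.
Qed.

Lemma ind_le x a y b : (x < a -> y < b) -> (ind x a <= ind y b)%nat.
Proof.
  intros H. unfold ind. destruct (Rlt_dec x a), (Rlt_dec y b); auto; exfalso; auto.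
Qed.

Lemma abs_shift X Y n a d : Rabs (X - Y) <= d -> Rabs (X - n) < a -> Rabs (Y - n) < a + d.
Proof.
  intros H1 H2. replace (Y - n) with ((X - n) - (X - Y)) by ring.
  eapply Rle_lt_trans; [apply Rabs_triang|]. rewrite Rabs_Ropp. lra.
Qed.

Theorem mainTheorem3 (n m : nat) (p : nat -> nat -> vec3) (Nx Ny Nz : nat -> vec3)
  (dx dy eps : R) (rc Dc : vec3) (dR dt : R) :
  (1 <= n)%nat -> (1 <= m)%nat ->
  (forall i, (i < n)%nat -> Nx i <> vzero /\ Ny i <> vzero /\ Nz i <> vzero) ->
  0 < dx -> 0 < dy -> 0 < eps ->
  0 <= dR -> sqrt 3 * dR <= PI -> 0 <= dt ->
  (forall r Delta, norm_inf (vsub r rc) <= dR -> norm_inf (vsub Delta Dc) <= dt ->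
     (Q n m p Nx Ny Nz dx dy eps (rot r) Delta
       <= Qhat n m p Nx Ny Nz dx dy eps rc Dc dR dt)%nat)
  /\ (dR = 0 -> dt = 0 ->
       Qhat n m p Nx Ny Nz dx dy eps rc Dc dR dt = Q n m p Nx Ny Nz dx dy eps (rot rc) Dc).
Proof.
  intros Hn Hm HN Hdx Hdy Heps HdR HPI Hdt. split.
  - intros r Delta Hr HD. unfold Q, Qhat. cbv zeta.
    apply sumN_le. intros i Hi. apply sumN_le. intros j Hj.
    destruct (HN i Hi) as [H1 [H2 H3]].
    apply Nat.mul_le_mono; [apply Nat.mul_le_mono|]; apply ind_le; apply abs_shift;
      apply term_bound; auto.
  - intros E1 E2. subst. unfold Q, Qhat. cbv zeta.
    apply sumN_ext. intros i Hi. apply sumN_ext. intros j Hj.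
    destruct (HN i Hi) as [H1 [H2 H3]].
    rewrite !delta_zero by auto. rewrite !Rplus_0_r. reflexivity.
Qed.
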